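(* For all $\alpha\in(0,1]$ and $D>0$ there exists $M(\alpha,D)>0$ such that, with $n_0:=4K(d+1)/\alpha$: for all $n\ge n_0$, all $\theta\in\Theta$, all $x\in[K^\theta]$ and all $x^*\in[K^*]$, if $|I_{n,D}(x,x^*,\theta)|\ge n\alpha/K$ then $\sup_{t\in[0,n]}|T^*_{x^*}(t)-T^\theta_x(t)|\le M(\alpha,D)$.
   Context: Fix integers $K\ge1$, $d\ge1$, $\sigma_-\in(0,1)$; $[K']=\{1,\dots,K'\}$; $\Delta_{K'}$ = probability vectors on $[K']$; $\Sigma^{\sigma_-}_{K'}$ = $K'\times K'$ stochastic matrices with all entries $\ge\sigma_-$; $\mathbb R_d[X]$ = real polynomials of degree $\le d$ on $\mathbb R_+$; $\Gamma$ a set of probability densities on $\mathbb R$. $\Theta=\bigcup_{K'=1}^K\{[K']\}\times\Delta_{K'}\times\Sigma^{\sigma_-}_{K'}\times\Gamma^{K'}\times(\mathbb R_d[X])^{K'}$, elements $\theta=(K^\theta,\pi^\theta,Q^\theta,\gamma^\theta,T^\theta)$ with trends $T^\theta_x\in\mathbb R_d[X]$; $\theta^*=(K^*,\pi^*,Q^*,\gamma^*,T^* )\in\Theta$ is a fixed (true) parameter. For $n\in\mathbb N^*$, $D>0$: $I_{n,D}(x,x^*,\theta)=\{t\in\{1,\dots,n\}:|T^*_{x^*}(t)-T^\theta_x(t)|\le D\}$. *)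

(* Defs.v *)
From HB Require Import structures.
From mathcomp Require Import all_boot all_order all_algebra.
From mathcomp Require Import all_classical all_reals all_analysis.
Set Implicit Arguments. Unset Strict Implicit. Unset Printing Implicit Defensive.
Import Order.TTheory GRing.Theory Num.Theory.
Local Open Scope ring_scope.

Definition is_density (R : realType) (g : R -> R) : Prop :=
  measurable_fun setT g /\ (forall x, 0 <= g x) /\
  (\int[@lebesgue_measure R]_x (g x)%:E = 1)%E.

(* An element theta = (K^theta, pi, Q, gamma, T) of the big union Theta;
   the state space [K'] = {1..K'} is represented by 'I_K' = {0..K'-1}. *)
Record param (R : realType) := Param {
  pK : nat;
  ppi : 'I_pK -> R;
  pQ : 'I_pK -> 'I_pK -> R;
  pgamma : 'I_pK -> (R -> R);
  pT : 'I_pK -> {poly R} }.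

Arguments ppi {R} p _.
Arguments pQ {R} p _ _.
Arguments pgamma {R} p _.
Arguments pT {R} p _.

Definition in_Theta (R : realType) (K d : nat) (sigma : R) (Gamma : set (R -> R))
  (th : param R) : Prop :=
  [/\ ((1 <= pK th)%N /\ (pK th <= K)%N),
      ((forall x, 0 <= ppi th x) /\ \sum_x ppi th x = 1),
      ((forall x y, sigma <= pQ th x y) /\ (forall x, \sum_y pQ th x y = 1)),
      (forall x, Gamma (pgamma th x)) &
      (forall x, (size (pT th x) <= d.+1)%N)].

Definition I_set (R : realType) (n : nat) (D : R) (Ts T : {poly R}) : seq nat :=
  [seq t <- iota 1 n | `|Ts.[t%:R] - T.[t%:R]| <= D].

(* Main.v *)
Require Import Defs.
From HB Require Import structures.
From mathcomp Require Import all_boot all_order all_algebra.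
From mathcomp Require Import all_classical all_reals all_analysis.
From mathcomp Require Import zify ring lra.
Import Order.TTheory GRing.Theory Num.Theory.
Lemma nth_spacing (s : seq nat) i j : sorted ltn s -> i <= j -> j < size s ->
  nth 0 s i + (j - i) <= nth 0 s j.
Proof.
move=> ss; elim: j => [|j IH] hij hjs.
  by move: hij; rewrite leqn0 => /eqP->; rewrite addn0.
case: (ltngtP i j.+1) hij => // [hlt _|-> _]; last by rewrite subnn addn0.
have := IH hlt (ltnW hjs).
have := @sorted_ltn_nth _ ltn ltn_trans 0 s ss j j.+1.
rewrite !inE hjs (ltnW hjs) => /(_ isT isT (ltnSn j)) h1 h2; lia.
Qed.

Lemma natL1 (i d k N : nat) : i <= d -> k * d.+1 <= N -> 0 < k -> i * k < N.
Proof. move=> hi hdk k0; have h1 := leq_mul hi (leqnn k); nia. Qed.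
Lemma natL2 (x n : nat) : 1 <= x < 1 + n -> x <= n.
Proof. lia. Qed.
Lemma natL3 (a b i j k : nat) : a + (j * k - i * k) <= b -> i < j -> a + k <= b.
Proof. move=> h hij; have h1 := leq_mul hij (leqnn k); rewrite mulSn in h1; lia. Qed.
Lemma natL5 (a k : nat) : a + k <= a -> 0 < k -> False.
Proof. lia. Qed.
Lemma natL6 (a n j : nat) : a <= n -> 0 < j -> a = n + j -> False.
Proof. lia. Qed.
Lemma natL4 (N k d : nat) : N < k.+1 * d.+1 -> 0 < k -> N <= 2 * k * d.+1.
Proof. nia. Qed.

Local Open Scope ring_scope.

Lemma lag_bound (R : realFieldType) (d : nat) (f : nat -> nat) (p : {poly R})
  (n k : nat) (D t : R) :
  injective f -> (size p <= d.+1)%N -> (0 < k)%N ->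
  (forall i, (i <= d)%N -> (f i <= n)%N) ->
  (forall i j, (i < j <= d)%N -> (f i + k <= f j)%N) ->
  (forall i, (i <= d)%N -> `|p.[(f i)%:R]| <= D) ->
  0 <= t <= n%:R ->
  `|p.[t]| <= (d.+1)%:R * D * (n%:R / k%:R) ^+ d.
Proof.
move=> finj hp k0 fn fsp pD /andP[t0 tn].
have xinj : injective (fun i => (f i)%:R : R) by move=> i j /eqP; rewrite eqr_nat => /eqP/finj.
rewrite {1}(lagrange_gen (ltn0Sn d) xinj hp) horner_sum.
have kpos : 0 < k%:R :> R by rewrite ltr0n.
have D0 : 0 <= D by apply: le_trans (pD 0%N (leq0n _)).
apply: le_trans (ler_norm_sum _ _ _) _.
have -> : (d.+1)%:R = \sum_(i < d.+1) 1 :> R by rewrite sumr_const card_ord.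
rewrite mulr_suml mulr_suml.
apply: ler_sum => i _; rewrite mul1r hornerM hornerC normrM.
apply: ler_pM => //; first exact: pD (ltnSE (ltn_ord i)).
rewrite lagrangeE //= hornerM hornerC !horner_prod normrM normfV !normr_prod.
rewrite mulrC -prodf_div.
have -> : (n%:R / k%:R) ^+ d = \prod_(j < d.+1 | j != i) (n%:R / k%:R : R).
  by rewrite prodr_const cardC1 card_ord.
apply: ler_prod => j ji; rewrite !hornerXsubC divr_ge0 //=.
have hj := ltnSE (ltn_ord j); have hi := ltnSE (ltn_ord i).
have dk : k%:R <= `|(f i)%:R - (f j)%:R| :> R.
  have : i != j :> nat by rewrite eq_sym.
  case: (ltngtP i j) => // h _.
    have := fsp i j; rewrite h hj => /(_ isT) h1.
    rewrite distrC ler_normr; apply/orP; left; rewrite lerBrDr -natrD ler_nat; lia.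
  have := fsp j i; rewrite h hi => /(_ isT) h1.
  rewrite ler_normr; apply/orP; left; rewrite lerBrDr -natrD ler_nat; lia.
rewrite ler_pdivrMr; last by apply: lt_le_trans dk.
have fjn : (f j)%:R <= n%:R :> R by rewrite ler_nat fn.
have fj0 : 0 <= (f j)%:R :> R by [].
apply: (le_trans (y := n%:R)).
  rewrite ler_norml; apply/andP; split; lra.
apply: le_trans (ler_wpM2l _ dk); last by rewrite divr_ge0.
by rewrite divfK // gt_eqF.
Qed.

Theorem proposition10 (R : realType) (K d : nat) (sigma : R)
  (Gamma : set (R -> R)) (ths : param R) :
  (1 <= K)%N -> (1 <= d)%N -> 0 < sigma < 1 ->
  (forall g, Gamma g -> is_density g) ->
  in_Theta K d sigma Gamma ths ->
  forall alpha D : R, 0 < alpha <= 1 -> 0 < D ->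
  exists M : R, 0 < M /\
    forall (n : nat) (th : param R) (x : 'I_(pK th)) (xs : 'I_(pK ths)),
      4 * K%:R * (d.+1)%:R / alpha <= n%:R ->
      in_Theta K d sigma Gamma th ->
      n%:R * alpha / K%:R <= (size (I_set n D (pT ths xs) (pT th x)))%:R ->
      forall t : R, 0 <= t <= n%:R ->
        `|(pT ths xs).[t] - (pT th x).[t]| <= M.
Proof.
move=> K1 d1 _ _ [_ _ _ _ hsz] alpha D /andP[a0 a1] D0.
have Kr : 0 < K%:R :> R by rewrite ltr0n.
set C : R := 2 * K%:R * (d.+1)%:R / alpha.
have C0 : 0 < C by rewrite /C divr_gt0 // !mulr_gt0.
exists ((d.+1)%:R * D * C ^+ d); split; first by rewrite !mulr_gt0 // exprn_gt0.
move=> n th x xs hn [_ _ _ _ hsz'] hI t ht.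
set p := pT ths xs - pT th x.
have -> : (pT ths xs).[t] - (pT th x).[t] = p.[t] by rewrite /p hornerD hornerN.
have hp : (size p <= d.+1)%N.
  by rewrite /p; apply: leq_trans (size_polyD _ _) _; rewrite size_polyN geq_max hsz hsz'.
move: hI; set s := I_set _ _ _ _ => hI.
set N := size s.
have n0 : 0 < n%:R :> R.
  by apply: lt_le_trans hn; rewrite divr_gt0 // !mulr_gt0.
have hN4 : (4 * d.+1 <= N)%N.
  rewrite -(ler_nat R); apply: le_trans hI; rewrite ler_pdivlMr // natrM.
  move: hn; rewrite ler_pdivrMr // => hn.
  have -> : 4%:R * d.+1%:R * K%:R = 4 * K%:R * d.+1%:R :> R by ring.
  exact: hn.
set k := (N %/ d.+1)%N.
have k4 : (4 <= k)%N.
  by rewrite /k; apply: leq_trans (leq_div2r d.+1 hN4); rewrite mulnK.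
have hNk : (N < k.+1 * d.+1)%N by rewrite /k ltn_ceil.
have hdk : (k * d.+1 <= N)%N by rewrite /k leq_trunc_div.
have ss : sorted ltn s by rewrite /s /I_set; apply: sorted_filter; [exact: ltn_trans|exact: iota_ltn_sorted].
set f := fun i => if (i <= d)%N then nth 0%N s (i * k) else (n + i)%N.
have k0 : (0 < k)%N by apply: leq_trans k4.
have ikN : forall i, (i <= d)%N -> (i * k < N)%N.
  by move=> i hi; exact: natL1 hi hdk k0.
have fmem : forall i, (i <= d)%N -> f i \in s.
  by move=> i hi; rewrite /f hi; apply: mem_nth; rewrite -/N ikN.
have fn : forall i, (i <= d)%N -> (f i <= n)%N.
  move=> i /fmem; rewrite /s /I_set mem_filter mem_iota => /andP[_]; exact: natL2.
have fsp : forall i j, (i < j <= d)%N -> (f i + k <= f j)%N.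
  move=> i j /andP[hij hj]; rewrite /f hj (leq_trans (ltnW hij) hj).
  have := @nth_spacing s (i * k) (j * k) ss (leq_mul (ltnW hij) (leqnn k)).
  by move=> /(_ (ikN j hj)) /natL3; apply.
have finj : injective f.
  move=> i j E.
  case: (ltngtP i j) => // h.
    case hj : (j <= d)%N.
      by have := fsp i j; rewrite h hj E => /(_ isT) /(@natL5 _ _) /(_ k0) [].
    case hi : (i <= d)%N.
      have Hn := fn i hi; move: E; rewrite {2}/f hj => E.
      case: (@natL6 _ _ _ Hn (leq_ltn_trans (leq0n i) h) E).
    by move: E; rewrite /f hi hj => /addnI.
  case hi : (i <= d)%N.
    by have := fsp j i; rewrite h hi -E => /(_ isT) /(@natL5 _ _) /(_ k0) [].
  case hj : (j <= d)%N.
    have Hn := fn j hj; move: E; rewrite {1}/f hi => E.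
    case: (@natL6 _ _ _ Hn (leq_ltn_trans (leq0n j) h) (esym E)).
  by move: E; rewrite /f hi hj => /addnI.
have pD : forall i, (i <= d)%N -> `|p.[(f i)%:R]| <= D.
  move=> i /fmem; rewrite /s /I_set mem_filter => /andP[+ _].
  by rewrite /p hornerD hornerN.
apply: le_trans (@lag_bound _ _ _ _ _ _ _ _ finj hp k0 fn fsp pD ht) _.
apply: ler_wpM2l; first by rewrite mulr_ge0 // ltW.
apply: (@lerXn2r _ d (n%:R / k%:R) C); rewrite ?nnegrE ?(ltW C0) ?divr_ge0 //.
rewrite ler_pdivrMr ?ltr0n //.
have hN2 : (N <= 2 * k * d.+1)%N by apply: natL4.
have : n%:R * alpha / K%:R <= (2 * k * d.+1)%:R :> R.
  by apply: le_trans hI _; rewrite ler_nat.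
rewrite ler_pdivrMr // -ler_pdivlMr // => h.
apply: le_trans h _; rewrite /C !natrM.
rewrite le_eqVlt; apply/orP; left; apply/eqP; field.
by rewrite gt_eqF.
Qed.
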